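(* Let $P$ be a basic program. (1) Every answer set by complement of $P$ is a minimal model of $P$. (2) If $P$ is naf-monotone, every answer set by reduct of $P$ is a minimal model of $P$. (3) Every answer set of $P$ (by complement or by reduct) supports each of its members; i.e., for every such answer set $M$ and every $a\in M$, $M$ supports $a$.
   Context: Fix a countable set $\mathcal{A}$ of atoms. A c-atom is $A=(A_d,A_c)$, $A_d\subseteq\mathcal{A}$, $A_c\subseteq 2^{A_d}$; $(\{p\},\{\{p\}\})$ is elementary; $\bot=(\mathcal{A},\emptyset)$; $A$ is monotone if $X\subseteq Y\subseteq A_d$, $X\in A_c$ imply $Y\in A_c$. Rule: $A\leftarrow A_1,\dots,A_k,\mathit{not}\,A_{k+1},\dots,\mathit{not}\,A_n$, $head(r)=A$, $pos(r)=\{A_1,..,A_k\}$, $neg(r)=\{A_{k+1},..,A_n\}$. Program = set of rules; positive if no naf-literals; basic if every head is elementary or $\bot$; naf-monotone if every c-atom in some $neg(r)$ is monotone. $S\models A$ iff $S\cap A_d\in A_c$; $S\models\mathit{not}\,A$ iff $S\cap A_d\notin A_c$; $S\models body(r)$ if it satisfies all body literals; a rule is satisfied if head satisfied or body not; model = satisfies all rules; minimal model = model with no proper subset a model. $S$ supports atom $a$ w.r.t. $P$ if some $r\in P$ and $X\in head(r)_c$ satisfy $S\models body(r)$, $X\subseteq S$, $a\in X$. Conditional satisfaction: $S\models_M A$ iff $S\models A$ and every $I$ with $S\cap A_d\subseteq I\subseteq M\cap A_d$ lies in $A_c$. For positive basic $P$: $T_P(S,M)=\{a\mid \exists r\in P,\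 head(r)=(\{a\},\{\{a\}\}),\ S\models_M B\ \forall B\in pos(r)\}$, $T^0_P(\emptyset,M)=\emptyset$, $T^{i+1}_P(\emptyset,M)=T_P(T^i_P(\emptyset,M),M)$, $T^\infty_P(\emptyset,M)=\bigcup_i T^i_P(\emptyset,M)$; a model $M$ is an answer set iff $M=T^\infty_P(\emptyset,M)$. Complement $\bar A=(A_d,2^{A_d}\setminus A_c)$; $\mathcal{C}(P)$ replaces each $\mathit{not}\,A$ by $\bar A$; answer set by complement = answer set of $\mathcal{C}(P)$. Reduct $P^M$: delete rules with some $\mathit{not}\,A$ in the body where $M\models A$, then delete remaining naf-literals; answer set by reduct = answer set of $P^M$. *)

(* Defs.v *)
From Stdlib Require Import List.
Import ListNotations.
Set Implicit Arguments.

Section Defs.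
Variable Atom : Type.

Definition aset := Atom -> Prop.
Definition subset (X Y : aset) : Prop := forall x, X x -> Y x.

Record catom := CAtom { dom : aset; cond : aset -> Prop }.

Definition wf_catom (A : catom) : Prop :=
  forall X, cond A X -> subset X (dom A).

Definition elem (p : Atom) : catom :=
  CAtom (fun x => x = p) (fun X => X = (fun x => x = p)).
Definition bot : catom := CAtom (fun _ => True) (fun _ => False).

Definition monotone (A : catom) : Prop :=
  forall X Y, subset X Y -> subset Y (dom A) -> cond A X -> cond A Y.

Record rule := Rule { head : catom; pos : list catom; neg : list catom }.
Definition program := rule -> Prop.

Definition rule_catoms (r : rule) : list catom := head r :: pos r ++ neg r.
Definition wf_program (P : program) : Prop :=
  forall r, P r -> forall A, In A (rule_catoms r) -> wf_catom A.

Definition positive (P : program) : Prop := forall r, P r -> neg r = [].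
Definition basic (P : program) : Prop :=
  forall r, P r -> (exists p, head r = elem p) \/ head r = bot.
Definition naf_monotone (P : program) : Prop :=
  forall r, P r -> forall A, In A (neg r) -> monotone A.

Definition sat (S : aset) (A : catom) : Prop :=
  cond A (fun x => S x /\ dom A x).
Definition sat_body (S : aset) (r : rule) : Prop :=
  (forall A, In A (pos r) -> sat S A) /\ (forall A, In A (neg r) -> ~ sat S A).
Definition sat_rule (S : aset) (r : rule) : Prop :=
  sat_body S r -> sat S (head r).
Definition model (P : program) (S : aset) : Prop :=
  forall r, P r -> sat_rule S r.
Definition minimal_model (P : program) (M : aset) : Prop :=
  model P M /\
  forall N, subset N M -> (exists x, M x /\ ~ N x) -> ~ model P N.

Definition supports (P : program) (S : aset) (a : Atom) : Prop :=
  exists r X, P r /\ cond (head r) X /\ sat_body S r /\ subset X S /\ X a.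

Definition csat (S M : aset) (A : catom) : Prop :=
  sat S A /\
  forall I, subset (fun x => S x /\ dom A x) I ->
            subset I (fun x => M x /\ dom A x) -> cond A I.

Definition TP (P : program) (S M : aset) : aset :=
  fun a => exists r, P r /\ head r = elem a /\ forall B, In B (pos r) -> csat S M B.

Fixpoint Titer (P : program) (M : aset) (n : nat) : aset :=
  match n with
  | O => fun _ => False
  | S k => TP P (Titer P M k) M
  end.

Definition Tinf (P : program) (M : aset) : aset :=
  fun a => exists n, Titer P M n a.

Definition answer_set_pos (P : program) (M : aset) : Prop :=
  model P M /\ forall a, M a <-> Tinf P M a.

Definition compl (A : catom) : catom :=
  CAtom (dom A) (fun X => subset X (dom A) /\ ~ cond A X).

Definition CP (P : program) : program :=
  fun r' => exists r, P r /\ r' = Rule (head r) (pos r ++ map compl (neg r)) [].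

Definition reduct (P : program) (M : aset) : program :=
  fun r' => exists r, P r /\ (forall A, In A (neg r) -> ~ sat M A) /\
                      r' = Rule (head r) (pos r) [].

Definition answer_set_compl (P : program) (M : aset) : Prop :=
  answer_set_pos (CP P) M.
Definition answer_set_reduct (P : program) (M : aset) : Prop :=
  answer_set_pos (reduct P M) M.

End Defs.

(* Main.v *)
Require Import Defs.
From Stdlib Require Import List.
Import ListNotations.

Section H.
Variable Atom : Type.

Lemma csat_sat (S N M : aset Atom) (B : catom Atom) :
  csat S M B -> subset S N -> subset N M -> sat N B.
Proof.
  intros [_ H] HSN HNM. apply H.
  - intros x [Sx Dx]; split; auto.
  - intros x [Nx Dx]; split; auto.
Qed.

Lemma sat_elem (N : aset Atom) a : sat N (elem a) -> N a.
Proof.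
  unfold sat; simpl. intro H.
  assert (E := f_equal (fun f => f a) H). simpl in E.
  assert (a = a) as Ha by reflexivity. rewrite <- E in Ha. tauto.
Qed.

Lemma sat_compl (M : aset Atom) A : sat M (compl A) -> ~ sat M A.
Proof. unfold sat; simpl. tauto. Qed.

Lemma compl_sat (M : aset Atom) A : ~ sat M A -> sat M (compl A).
Proof. unfold sat; simpl. intros H; split; [intros x [_ D]; exact D| exact H]. Qed.

Lemma Titer_sub (P : program Atom) M :
  (forall a, M a <-> Tinf P M a) -> forall n, subset (Titer P M n) M.
Proof. intros H n x Hx. apply H. exists n. exact Hx. Qed.

End H.

Theorem proposition4 (Atom : Type)
  (Atom_countable : exists f : Atom -> nat, forall x y, f x = f y -> x = y)
  (P : program Atom) (HwfP : wf_program P) (HbP : basic P) :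
  (forall M : aset Atom, answer_set_compl P M -> minimal_model P M) /\
  (naf_monotone P -> forall M : aset Atom, answer_set_reduct P M -> minimal_model P M) /\
  (forall M : aset Atom, (answer_set_compl P M \/ answer_set_reduct P M) ->
     forall a, M a -> supports P M a).
Proof.
  split; [|split].
  - intros M [Hmod Heq]. split.
    + intros r Hr [Hp Hn].
      apply (Hmod (Rule (Defs.head r) (pos r ++ map (@compl Atom) (neg r)) [])).
      * exists r; split; [exact Hr|reflexivity].
      * split; simpl.
        -- intros A HA. apply in_app_or in HA. destruct HA as [HA|HA]; [auto|].
           apply in_map_iff in HA. destruct HA as [A' [<- HA']].
           apply compl_sat. auto.
        -- intros A [].
    + intros N HNM [x [Mx Nx]] HN. apply Nx.
      assert (K : forall n, subset (Titer (CP P) M n) N).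
      { induction n as [|k IH]; intros y Hy; [destruct Hy|].
        simpl in Hy. destruct Hy as [r' [[r [Hr ->]] [Hh Hpos]]]. simpl in Hh, Hpos.
        apply sat_elem. rewrite <- Hh. apply (HN r Hr). split.
        - intros B HB. apply csat_sat with (S:=Titer (CP P) M k) (M:=M); auto.
          apply Hpos. apply in_or_app; auto.
        - intros A HA. apply sat_compl.
          apply csat_sat with (S:=Titer (CP P) M k) (M:=M); auto.
          apply Hpos. apply in_or_app; right. apply in_map. exact HA. }
      destruct (proj1 (Heq x) Mx) as [n Hn]. exact (K n x Hn).
  - intros Hnm M [Hmod Heq]. split.
    + intros r Hr [Hp Hn].
      apply (Hmod (Rule (Defs.head r) (pos r) [])).
      * exists r; split; [exact Hr|split; [exact Hn|reflexivity]].
      * split; simpl; [exact Hp|intros A []].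
    + intros N HNM [x [Mx Nx]] HN. apply Nx.
      assert (K : forall n, subset (Titer (reduct P M) M n) N).
      { induction n as [|k IH]; intros y Hy; [destruct Hy|].
        simpl in Hy. destruct Hy as [r' [[r [Hr [Hneg ->]]] [Hh Hpos]]]. simpl in Hh, Hpos.
        apply sat_elem. rewrite <- Hh. apply (HN r Hr). split.
        - intros B HB. apply csat_sat with (S:=Titer (reduct P M) M k) (M:=M); auto.
        - intros A HA HsN. apply (Hneg A HA). unfold sat in *.
          apply (Hnm r Hr A HA (fun x => N x /\ dom A x)); auto.
          + intros z [Nz Dz]; split; auto.
          + intros z [_ Dz]; exact Dz. }
      destruct (proj1 (Heq x) Mx) as [n Hn]. exact (K n x Hn).
  - intros M HM a Ma.
    destruct HM as [[Hmod Heq]|[Hmod Heq]];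
      destruct (proj1 (Heq a) Ma) as [[|k] Hk]; [destruct Hk| |destruct Hk|];
      pose proof (Titer_sub _ _ _ Heq k) as Hsub.
    + destruct Hk as [r' [[r [Hr ->]] [Hh Hpos]]]. simpl in Hh, Hpos.
      exists r, (fun x => x = a). repeat split.
      * exact Hr.
      * rewrite Hh. reflexivity.
      * intros B HB. apply csat_sat with (S:=Titer (CP P) M k) (M:=M); auto.
        -- apply Hpos. apply in_or_app; auto.
        -- intros z Hz; exact Hz.
      * intros A HA. apply sat_compl.
        apply csat_sat with (S:=Titer (CP P) M k) (M:=M); auto.
        -- apply Hpos. apply in_or_app; right. apply in_map. exact HA.
        -- intros z Hz; exact Hz.
      * intros z ->; exact Ma.
    + destruct Hk as [r' [[r [Hr [Hneg ->]]] [Hh Hpos]]]. simpl in Hh, Hpos.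
      exists r, (fun x => x = a). repeat split.
      * exact Hr.
      * rewrite Hh. reflexivity.
      * intros B HB. apply csat_sat with (S:=Titer (reduct P M) M k) (M:=M); auto.
        intros z Hz; exact Hz.
      * exact Hneg.
      * intros z ->; exact Ma.
Qed.
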